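(* Let $A_1,A_2\in\mathbf{C}^{n\times n}$. The square bimatrix $\{A_1,A_2\}$ is nonsingular if and only if the complex matrix $$\{A_1,A_2\}_\diamond=\begin{bmatrix}A_1 & A_2^{\#}\\ A_2 & A_1^{\#}\end{bmatrix}\in\mathbf{C}^{2n\times 2n}$$ is nonsingular. Moreover, in that case $\{A_1,A_2\}^{-1}=\{A_3,A_4\}$, where $A_3,A_4\in\mathbf{C}^{n\times n}$ are given by $$\begin{bmatrix}A_3\\ A_4\end{bmatrix}=\left(\{A_1,A_2\}_\diamond\right)^{-1}\begin{bmatrix}I_n\\ 0_{n\times n}\end{bmatrix}.$$
   Context: For a complex matrix $P$, $P^{\#}$ denotes its entrywise complex conjugate. For $A_1,A_2\in\mathbf{C}^{n\times m}$, the bimatrix $\{A_1,A_2\}$ is the (real-linear) map $\mathbf{C}^m\to\mathbf{C}^n$, $x\mapsto A_1x+A_2^{\#}x^{\#}$. Two bimatrices are equal if they coincide as maps. The product of bimatrices is composition of maps: $\{A_1,A_2\}\{B_1,B_2\}x=\{A_1,A_2\}(\{B_1,B_2\}x)$; one has $\{A_1,A_2\}\{B_1,B_2\}=\{A_1B_1+A_2^{\#}B_2,\;A_1^{\#}B_2+A_2B_1\}$. The identity bimatrix is $\mathcal{I}_n=\{I_n,0_{n\times n}\}$ (the identity map on $\mathbf{C}^n$). A square bimatrix $\{A_1,A_2\}$ (with $A_1,A_2\in\mathbf{C}^{n\times n}$) is nonsingular if there exists a bimatrix $\{A_3,A_4\}$ with $\{A_1,A_2\}\{A_3,A_4\}=\{A_3,A_4\}\{A_1,A_2\}=\mathcal{I}_n$;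 then $\{A_3,A_4\}$ is called the inverse $\{A_1,A_2\}^{-1}$. *)

(* Defs.v *)
From HB Require Import structures.
From mathcomp Require Import all_boot all_order all_algebra.
From mathcomp Require Import reals.
From mathcomp Require Import complex.
Set Implicit Arguments. Unset Strict Implicit. Unset Printing Implicit Defensive.
Import GRing.Theory Num.Theory.
Local Open Scope ring_scope.

Definition conjmx (R : realType) (m n : nat) (P : 'M[R[i]]_(m, n)) : 'M[R[i]]_(m, n) :=
  map_mx (@conjc R) P.

(* The bimatrix {A1,A2} as the real-linear map x |-> A1 x + A2^# x^# on C^m
   (column vectors). *)
Definition bimx_app (R : realType) (n m : nat) (A1 A2 : 'M[R[i]]_(n, m))
  (x : 'cV[R[i]]_m) : 'cV[R[i]]_n :=
  A1 *m x + conjmx A2 *m conjmx x.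

Definition bimx_inverse_of (R : realType) (n : nat) (A1 A2 B1 B2 : 'M[R[i]]_n) : Prop :=
  (forall x : 'cV[R[i]]_n, bimx_app A1 A2 (bimx_app B1 B2 x) = x) /\
  (forall x : 'cV[R[i]]_n, bimx_app B1 B2 (bimx_app A1 A2 x) = x).

Definition bimx_nonsingular (R : realType) (n : nat) (A1 A2 : 'M[R[i]]_n) : Prop :=
  exists B1 B2 : 'M[R[i]]_n, bimx_inverse_of A1 A2 B1 B2.

Definition bimx_diamond (R : realType) (n : nat) (A1 A2 : 'M[R[i]]_n) : 'M[R[i]]_(n + n) :=
  block_mx A1 (conjmx A2) A2 (conjmx A1).

(* Main.v *)
Require Import Defs.
From HB Require Import structures.
From mathcomp Require Import all_boot all_order all_algebra.
From mathcomp Require Import reals.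
From mathcomp Require Import complex.
Import GRing.Theory Num.Theory.
Local Open Scope ring_scope.

Section Aux.
Variable R : realType.
Local Notation C := (R[i]).
Local Notation cj := (@Defs.conjmx R _ _).

Lemma cjK m n (A : 'M[C]_(m, n)) : cj (cj A) = A.
Proof. by apply/matrixP => i j; rewrite !mxE conjcK. Qed.

Lemma cjM m n p (A : 'M[C]_(m, n)) (B : 'M[C]_(n, p)) : cj (A *m B) = cj A *m cj B.
Proof. exact: map_mxM. Qed.

Lemma cjD m n (A B : 'M[C]_(m, n)) : cj (A + B) = cj A + cj B.
Proof. exact: map_mxD. Qed.

Lemma cjZ m n a (A : 'M[C]_(m, n)) : cj (a *: A) = conjc a *: cj A.
Proof. exact: map_mxZ. Qed.

Lemma cj0 m n : cj (0 : 'M[C]_(m, n)) = 0.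
Proof. exact: map_mx0. Qed.

Lemma cj1 n : cj (1%:M : 'M[C]_n) = 1%:M.
Proof. exact: map_mx1. Qed.

Lemma conjci : conjc ('i%C : C) = - 'i%C.
Proof. by apply/eqP; rewrite eq_complex /= oppr0 !eqxx. Qed.

Lemma diamond_app n (A1 A2 : 'M[C]_n) (x : 'cV[C]_n) :
  bimx_diamond A1 A2 *m col_mx x (cj x) =
  col_mx (bimx_app A1 A2 x) (cj (bimx_app A1 A2 x)).
Proof.
rewrite /bimx_diamond mul_block_col /bimx_app cjD !cjM !cjK.
by rewrite [X in col_mx _ X]addrC.
Qed.

Lemma diamond_mul n (A1 A2 B1 B2 : 'M[C]_n) :
  bimx_diamond A1 A2 *m bimx_diamond B1 B2 =
  bimx_diamond (A1 *m B1 + cj A2 *m B2) (cj A1 *m B2 + A2 *m B1).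
Proof.
rewrite /bimx_diamond mulmx_block !cjD !cjM !cjK.
by congr block_mx; rewrite addrC.
Qed.

Lemma diamond1 n : bimx_diamond (1%:M : 'M[C]_n) 0 = 1%:M.
Proof. by rewrite /bimx_diamond cj0 cj1 -scalar_mx_block. Qed.

Lemma mx_eq0 m n (N : 'M[C]_(m, n)) : (forall x : 'cV_n, N *m x = 0) -> N = 0.
Proof.
move=> H; apply/matrixP => i j.
have := H (delta_mx j 0); rewrite -colE => /matrixP /(_ i 0).
by rewrite !mxE.
Qed.

Lemma mx2_eq0 m n (v : 'M[C]_(m, n)) : v *+ 2 = 0 -> v = 0.
Proof.
move/matrixP => H; apply/matrixP => i j; have := H i j.
rewrite mulmxnE !mxE => /eqP; rewrite mulrn_eq0 /= => /eqP //.
Qed.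

Lemma span_eq0 m n (N : 'M[C]_(m, n + n)) :
  (forall x : 'cV[C]_n, N *m col_mx x (cj x) = 0) -> N = 0.
Proof.
move=> H; rewrite -[N]hsubmxK.
set Nl := lsubmx N; set Nr := rsubmx N.
have H1 (x : 'cV[C]_n) : Nl *m x + Nr *m cj x = 0 by rewrite -mul_row_col hsubmxK H.
have H2 (x : 'cV[C]_n) : Nl *m x - Nr *m cj x = 0.
  have := H1 ('i%C *: x); rewrite cjZ conjci -!scalemxAr scaleNr.
  rewrite -scalerBr => /eqP; rewrite scaler_eq0 => /orP [|/eqP //].
  by rewrite eq_complex /= eqxx /= oner_eq0.
have El : Nl = 0.
  apply: mx_eq0 => x; apply: mx2_eq0.
  have := congr2 +%R (H1 x) (H2 x); rewrite addr0 => <-.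
  by rewrite addrACA subrr addr0 mulr2n.
have Er : Nr = 0.
  apply: mx_eq0 => x; have := H1 (cj x); by rewrite El mul0mx add0r cjK.
by rewrite El Er row_mx0.
Qed.

End Aux.

Theorem lemma1 (R : realType) (n : nat) (A1 A2 : 'M[R[i]]_n) :
  (bimx_nonsingular A1 A2 <-> bimx_diamond A1 A2 \in unitmx) /\
  (bimx_diamond A1 A2 \in unitmx ->
   let X := invmx (bimx_diamond A1 A2) *m (col_mx (1%:M : 'M[R[i]]_n) 0) in
   bimx_inverse_of A1 A2 (usubmx X) (dsubmx X)).
Proof.
have part2 : bimx_diamond A1 A2 \in unitmx ->
   let X := invmx (bimx_diamond A1 A2) *m (col_mx (1%:M : 'M[R[i]]_n) 0) in
   bimx_inverse_of A1 A2 (usubmx X) (dsubmx X).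
  move=> U X.
  have DX : bimx_diamond A1 A2 *m X = col_mx 1%:M 0 by rewrite /X mulKVmx.
  rewrite -[X]vsubmxK /bimx_diamond mul_block_col in DX.
  case/eq_col_mx: DX => E1 E2.
  have M1 : bimx_diamond A1 A2 *m bimx_diamond (usubmx X) (dsubmx X) = 1%:M.
    by rewrite diamond_mul E1 addrC E2 diamond1.
  have M2 := mulmx1C M1.
  split => x.
  - have := @diamond_app R _ A1 A2 (bimx_app (usubmx X) (dsubmx X) x).
    rewrite -diamond_app mulmxA M1 mul1mx => /esym /eq_col_mx [] //.
  - have := @diamond_app R _ (usubmx X) (dsubmx X) (bimx_app A1 A2 x).
    rewrite -diamond_app mulmxA M2 mul1mx => /esym /eq_col_mx [] //.
split=> //; split.
- case=> B1 [B2 [H _]].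
  suff M1 : bimx_diamond A1 A2 *m bimx_diamond B1 B2 = 1%:M.
    by case: (mulmx1_unit M1).
  apply/eqP; rewrite -subr_eq0; apply/eqP.
  apply: span_eq0 => x.
  rewrite mulmxBl mul1mx -mulmxA diamond_app diamond_app H.
  by rewrite subrr.
- move=> U; exists (usubmx (invmx (bimx_diamond A1 A2) *m col_mx 1%:M 0)),
    (dsubmx (invmx (bimx_diamond A1 A2) *m col_mx 1%:M 0)).
  exact: part2 U.
Qed.
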